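(* Let $D$ be an indecomposable chord diagram with $|D|$ chords, let $C$ be a chord diagram, and let $k,\ell$ be integers for which the operations below are defined. Then $$\mathrm{Ins}_{D,\ell}\big(R_k(C)\big)=R_k\big(\mathrm{Ins}_{D,\ell-2}(C)\big)\quad\text{if }k\le \ell-2,$$ $$\mathrm{Ins}_{D,\ell}\big(R_k(C)\big)=R_{k+2|D|}\big(\mathrm{Ins}_{D,\ell-1}(C)\big)\quad\text{if }1\le \ell-1\le k.$$
   Context: A chord diagram of size $n$ is a perfect matching of $2n$ linearly ordered points into $n$ pairs (chords), considered up to order isomorphism; the root chord is the chord containing the first point. Its intervals are the $2n-1$ gaps between consecutive points, numbered $1,\dots,2n-1$ from left to right. A diagram is indecomposable if it is not the concatenation (side by side juxtaposition) of two nonempty diagrams. For a diagram $C$ of size $n$ and $1\le k\le 2n-1$, $R_k(C)$ is the diagram of size $n+1$ obtained by adding a new chord whose left endpoint is placed before all points of $C$ and whose right endpoint is placed in the $k$-th interval of $C$ (this chord is the new root chord). For a diagram $D'$, $\mathrm{Ins}_{D',k}(C)$ is the diagram obtained by placing all points of $D'$ (in order, with their matching) inside the $k$-th interval of $C$. *)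

(* Defs.v *)
From mathcomp Require Import all_boot.
Set Implicit Arguments. Unset Strict Implicit. Unset Printing Implicit Defensive.

(* A chord diagram of size n is represented canonically (up to order
   isomorphism) by the sequence s of length 2n over the points 0..2n-1
   (left to right), where nth 0 s i is the partner of point i. *)
Definition chord_diagram (s : seq nat) : Prop :=
  forall i, i < size s ->
    [/\ nth 0 s i < size s, nth 0 s (nth 0 s i) = i & nth 0 s i != i].

Definition nchords (s : seq nat) : nat := (size s)./2.

Definition concat (s1 s2 : seq nat) : seq nat :=
  s1 ++ map (fun p => p + size s1) s2.

Definition indecomposable (D : seq nat) : Prop :=
  ~ exists D1 D2, [/\ chord_diagram D1, chord_diagram D2,
                      0 < size D1, 0 < size D2 & D = concat D1 D2].

(* Interval k (1 <= k <= 2n-1) is the gap between point k-1 and point k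
   (0-indexed), i.e. it has exactly k points to its left. *)

(* Ins_{D,k}(C): place all points of D inside the k-th interval of C. *)
Definition ins (D : seq nat) (k : nat) (C : seq nat) : seq nat :=
  let m := size D in
  let sh p := if p < k then p else p + m in
  map sh (take k C) ++ map (fun p => p + k) D ++ map sh (drop k C).

(* R_k(C): new root chord from a new first point to the k-th interval of C. *)
Definition R (k : nat) (C : seq nat) : seq nat :=
  let sh p := if p < k then p.+1 else p.+2 in
  k.+1 :: map sh (take k C) ++ 0 :: map sh (drop k C).

(* Main.v *)
Require Import Defs.
From mathcomp Require Import all_boot zify.
Lemma case1 (D A B1 B2 : seq nat) :
  let k := size A in let l := size A + size B1 + 2 in
  ins D l (R k (A ++ B1 ++ B2)) = R k (ins D (l - 2) (A ++ B1 ++ B2)).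
Proof.
move=> k l.
have -> : l - 2 = size A + size B1 by rewrite /l addnK.
rewrite /ins /R /= take_size_cat // drop_size_cat //.
set f := fun p => if p < k then p.+1 else p.+2.
set g := fun p => if p < l then p else p + size D.
set h := fun p => if p < size A + size B1 then p else p + size D.
have E : A ++ B1 ++ B2 = (A ++ B1) ++ B2 by rewrite catA.
rewrite E (take_size_cat B2 (size_cat A B1)) (drop_size_cat B2 (size_cat A B1)).
rewrite !map_cat -!catA take_size_cat ?size_map // drop_size_cat ?size_map //.
have -> : k.+1 :: map f A ++ 0 :: map f B1 ++ map f B2 =
  (k.+1 :: map f A ++ 0 :: map f B1) ++ map f B2 by rewrite /= -catA.
rewrite take_size_cat; last by rewrite /= size_cat /= !size_map /l; lia.
rewrite drop_size_cat; last by rewrite /= size_cat /= !size_map /l; lia.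
rewrite /= !map_cat /= -!map_comp -!catA /=.
have Hg1 : g k.+1 = k.+1 by rewrite /g /l /k ifT //; lia.
have Hg0 : g 0 = 0 by rewrite /g /l ifT //; lia.
rewrite Hg1 Hg0.
congr (_ :: _ ++ _ :: _ ++ _ ++ _); apply: eq_map => p /=; rewrite /f /g /h /l /k;
  repeat case: ifP; lia.
Qed.
Lemma case2 (D A B1 B2 : seq nat) :
  all (fun d => d < size D) D ->
  let k := size A + size B1 in let l := (size A).+1 in
  ins D l (R k (A ++ B1 ++ B2)) = R (k + size D) (ins D (l - 1) (A ++ B1 ++ B2)).
Proof.
move=> HD k l.
have -> : l - 1 = size A by rewrite /l subn1.
have E : A ++ B1 ++ B2 = (A ++ B1) ++ B2 by rewrite catA.
rewrite /ins /R /= E (take_size_cat B2 (size_cat A B1)) (drop_size_cat B2 (size_cat A B1)) -E.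
set f := fun p => if p < k then p.+1 else p.+2.
set g := fun p => if p < l then p else p + size D.
set h := fun p => if p < size A then p else p + size D.
set f' := fun p => if p < k + size D then p.+1 else p.+2.
rewrite (take_size_cat (B1 ++ B2) (erefl (size A))) (drop_size_cat (B1 ++ B2) (erefl (size A))).
rewrite map_cat -catA (take_size_cat _ (size_map f A)) (drop_size_cat _ (size_map f A)).
rewrite !map_cat !catA.
set L := (X in take _ X).
have -> : L = (map h A ++ [seq p + size A | p <- D] ++ map h B1) ++ map h B2.
  by rewrite /L -!catA.
rewrite take_size_cat; last by rewrite !size_cat !size_map /k; lia.
rewrite drop_size_cat; last by rewrite !size_cat !size_map /k; lia.
rewrite /= !map_cat -!map_comp -!catA /=.
have Hg1 : (if k.+1 < l then k.+1 else k.+1 + size D) = (k + size D).+1 by rewrite /l /k ifF //; lia.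
have Hg0 : g 0 = 0 by rewrite /g /l.
rewrite Hg1 Hg0.
congr (_ :: _ ++ _ ++ _ ++ _ :: _).
- by apply: eq_map => p /=; rewrite /f /g /h /f' /l /k; repeat case: ifP; lia.
- apply/eq_in_map => p /(allP HD) /= Hp; rewrite /f' /k; case: ifP; lia.
- by apply: eq_map => p /=; rewrite /f /g /h /f' /l /k; repeat case: ifP; lia.
- by apply: eq_map => p /=; rewrite /f /g /h /f' /l /k; repeat case: ifP; lia.
Qed.
Lemma cd_even D : chord_diagram D -> size D = 2 * nchords D.
Proof.
move=> HD; set n := size D.
pose g := fun i : 'I_n => insubd i (nth 0 D i) : 'I_n.
have gv : forall i : 'I_n, val (g i) = nth 0 D i.
  by move=> i; rewrite /g insubdK //; case: (HD i (ltn_ord i)).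
have gK : involutive g.
  by move=> i; apply: val_inj; rewrite !gv; case: (HD i (ltn_ord i)).
have E1 : \sum_(i < n) (i < nth 0 D i) = \sum_(i < n) (nth 0 D i < i).
  rewrite (reindex_inj (inv_inj gK)) /=.
  by apply: eq_bigr => i _; rewrite -!gv gK.
have E2 : \sum_(i < n) ((nth 0 D i < i) + (i < nth 0 D i)) = n.
  rewrite -[in RHS](card_ord n) -sum1_card; apply: eq_bigr => i _.
  case: (HD i (ltn_ord i)) => _ _; case: ltngtP => // ->; rewrite eqxx.
move: E2; rewrite big_split /= E1 => E2.
rewrite /nchords -/n -E2 addnn doubleK; lia.
Qed.

Theorem lemma3p2 (D C : seq nat) (k l : nat) :
  chord_diagram D -> indecomposable D -> chord_diagram C ->
  (1 <= k -> k <= l - 2 -> l - 2 <= size C - 1 -> 2 <= l ->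
     ins D l (R k C) = R k (ins D (l - 2) C)) /\
  (1 <= l - 1 -> l - 1 <= k -> k <= size C - 1 -> 1 <= l ->
     ins D l (R k C) = R (k + 2 * nchords D) (ins D (l - 1) C)).
Proof.
move=> HD _ HC; split.
- move=> h1 h2 h3 h4.
  set A := take k C; set B1 := take (l - 2 - k) (drop k C);
  set B2 := drop (l - 2 - k) (drop k C).
  have EC : C = A ++ B1 ++ B2 by rewrite /B1 /B2 !cat_take_drop.
  have sA : size A = k by rewrite /A size_takel //; lia.
  have sB1 : size B1 = l - 2 - k by rewrite /B1 size_takel // size_drop; lia.
  have := case1 D A B1 B2; rewrite /= -EC sA sB1.
  by have -> : k + (l - 2 - k) + 2 = l by lia.
- move=> h1 h2 h3 h4.
  set A := take (l - 1) C; set B1 := take (k - (l - 1)) (drop (l - 1) C);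
  set B2 := drop (k - (l - 1)) (drop (l - 1) C).
  have EC : C = A ++ B1 ++ B2 by rewrite /B1 /B2 !cat_take_drop.
  have sA : size A = l - 1 by rewrite /A size_takel //; lia.
  have sB1 : size B1 = k - (l - 1) by rewrite /B1 size_takel // size_drop; lia.
  have HDa : all (fun d => d < size D) D.
    apply/(all_nthP 0) => i Hi; by case: (HD i Hi).
  have := case2 D A B1 B2 HDa; rewrite /= -EC sA sB1 -cd_even //.
  have -> : (l - 1).+1 = l by lia.
  by have -> : l - 1 + (k - (l - 1)) = k by lia.
Qed.
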